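(* Let $T_1,T_2,\dots$ be independent random variables with $T_i\sim\mathrm{Geometric}(p_i)$, $p_i=(n-i+1)/n$ (i.e. $P(T_i=k)=p_i(1-p_i)^{k-1}$ for $k\ge1$). For any $u>0$ and $\eta\in(0,u)$ there are positive constants $\Delta_2$ and $\beta=\beta(u,\eta)$ such that for all large enough $n$ and all $m<\beta n$, $$P\left(T_1+T_2+\cdots+T_{\lfloor(u-\eta)m\rfloor}>um\right)\le\exp\big[-\eta m\log(n/m)+\Delta_2 m\big].$$ Moreover, $\beta(u,\eta)\downarrow0$ as $\eta\downarrow0$, and for fixed $\eta$, $\beta(u,\eta)$ is a decreasing function of $u$. *)

(* Defs.v *)
From HB Require Import structures.
From mathcomp Require Import all_boot all_order all_algebra.
From mathcomp Require Import all_classical all_reals all_analysis.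
Set Implicit Arguments. Unset Strict Implicit. Unset Printing Implicit Defensive.
Import Order.TTheory GRing.Theory Num.Theory.
Local Open Scope classical_set_scope.
Local Open Scope ring_scope.

Definition mutually_independent d (Omega : measurableType d) (R : realType)
  (P : probability Omega R) (I : set nat) (X : nat -> {RV P >-> R}) : Prop :=
  forall (J : seq nat), uniq J -> {subset J <= I} ->
  forall B : nat -> set R, (forall i, measurable (B i)) ->
  P (\bigcap_(i in [set` J]) (X i @^-1` B i)) =
  (\prod_(i <- J) P (X i @^-1` B i))%E.

Definition geometric_law d (Omega : measurableType d) (R : realType)
  (P : probability Omega R) (p : R) (X : {RV P >-> R}) : Prop :=
  forall k : nat, (0 < k)%N ->
  P (X @^-1` [set k%:R]) = (p * (1 - p) ^+ k.-1)%:E.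

Definition p_coupon (R : realType) (n i : nat) : R :=
  ((n%:R - i%:R + 1) / n%:R).

Arguments mutually_independent {d Omega R} P I X.
Arguments geometric_law {d Omega R} P p X.

(* Main.v *)
Require Import Defs.
From HB Require Import structures.
From mathcomp Require Import all_boot all_order all_algebra.
From mathcomp Require Import all_classical all_reals all_analysis.
From mathcomp Require Import ring lra.
Import Order.TTheory GRing.Theory Num.Theory.
Local Open Scope classical_set_scope.
Local Open Scope ring_scope.

Fixpoint vecs (k L : nat) : seq (seq nat) :=
  if k is k'.+1 then [seq j :: s | j <- iota 0 L.+1, s <- vecs k' L]
  else [:: [::]].

Lemma vecsS k L : vecs k.+1 L = [seq j :: s | j <- iota 0 L.+1, s <- vecs k L].
Proof. by []. Qed.

Lemma mem_vecs k L s : (s \in vecs k L) = (size s == k) && all (fun x => x <= L)%N s.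
Proof.
elim: k s => [|k IH] [|j s] //; rewrite vecsS.
- by apply/negbTE/allpairsPdep => -[x [y [_ _]]].
- apply/allpairsPdep/idP.
  + move=> [x [y [hx hy [-> ->]]]]; move: hx hy; rewrite mem_iota IH add0n ltnS /=.
    by move=> hx /andP [/eqP -> ->]; rewrite eqxx hx.
  + rewrite /=; case/andP => /eqP [hk] /andP [hj hs]; exists j, s; split=> //.
    * by rewrite -[0%N :: _]/(iota 0 L.+1) mem_iota ltnS hj.
    * by rewrite IH hk eqxx.
Qed.

Lemma sum_vecs (R : comPzRingType) (x : R) k L :
  \sum_(s <- vecs k L) x ^+ sumn s = (\sum_(v < L.+1) x ^+ v) ^+ k.
Proof.
elim: k => [|k IH]; first by rewrite big_seq1 expr0.
rewrite vecsS big_allpairs_dep /= exprS -IH big_distrl /=.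
rewrite -[0%N :: _]/(iota 0 L.+1) -[iota 0 L.+1]/(index_iota 0 L.+1) big_mkord.
apply: eq_bigr => j _; rewrite big_distrr /=; apply: eq_bigr => s _.
by rewrite exprD.
Qed.

Lemma geo_half (R : numFieldType) N : \sum_(v < N) (2^-1 : R) ^+ v <= 2.
Proof.
suff: \sum_(v < N) (2^-1 : R) ^+ v = 2 - 2 * 2^-1 ^+ N.
  move=> ->; rewrite gerBl; apply: mulr_ge0; first by [].
  by apply: exprn_ge0; rewrite invr_ge0.
elim: N => [|N IH]; first by rewrite big_ord0 expr0 mulr1 subrr.
rewrite big_ord_recr /= IH exprSr.
have h2 : (2 : R) != 0 by rewrite pnatr_eq0.
by field.
Qed.

Lemma exists_vec (e : nat -> nat) k L : (L <= \sum_(j < k) e j)%N ->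
  exists s, [/\ s \in vecs k L, sumn s = L & forall j, (j < k)%N -> (nth 0 s j <= e j)%N].
Proof.
elim: k e L => [|k IH] e L.
  rewrite big_ord0 leqn0 => /eqP ->; exists [::]; split => //; by rewrite inE.
rewrite big_ord_recl => hL.
have hm : (L - minn (e 0%N) L <= \sum_(j < k) e j.+1)%N.
  by rewrite leq_subLR; case: (leqP (e 0%N) L) => h; [exact: hL | rewrite leq_addr].
have [s [hs1 hs2 hs3]] := IH (fun j => e j.+1) (L - minn (e 0%N) L)%N hm.
exists (minn (e 0%N) L :: s); split.
- move: hs1; rewrite !mem_vecs /= => /andP [/eqP -> /allP h]; rewrite eqxx geq_minr /=.
  apply/allP => x /h; move/leq_trans; apply; exact: leq_subr.
- by rewrite /= hs2 subnKC // geq_minr.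
- by case=> [|j] /=; [rewrite geq_minl | exact: hs3].
Qed.
Lemma le_geo0 (R : realType) (x q : R) : 0 <= q < 1 -> (forall M, x <= q ^+ M) -> x <= 0.
Proof.
move=> /andP [q0 q1] h.
have hc : (GRing.exp q : R^nat) n @[n --> \oo] --> 0.
  by apply: cvg_expr; rewrite ger0_norm.
rewrite leNgt; apply/negP => x0.
have [N _ hN] := cvgr_lt _ hc _ x0.
have := hN N (leqnn N) => /=.
by rewrite ltNge h.
Qed.

Section Geom.
Variables (d : measure_display) (Omega : measurableType d) (R : realType).
Variables (P : probability Omega R) (p : R) (X : {RV P >-> R}).
Hypothesis hp : 0 < p <= 1.
Hypothesis hX : forall k : nat, (0 < k)%N ->
  P (X @^-1` [set k%:R]) = (p * (1 - p) ^+ k.-1)%:E.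

Let F (j : nat) := X @^-1` [set j.+1%:R].
Definition GG (M : nat) := \big[setU/set0]_(j < M) F j.

Lemma F_meas j : measurable (F j).
Proof. exact: (measurable_funPTI X (measurable_set1 _)). Qed.

Lemma GG_meas M : measurable (GG M).
Proof. by apply: bigsetU_measurable => j _; exact: F_meas. Qed.

Lemma PGG M : P (GG M) = (1 - (1 - p) ^+ M)%:E.
Proof.
rewrite /GG measure_bigsetU //; last first.
  move=> i j _ _ [w [/= hi hj]]; move: hi hj; rewrite /F /= => -> /eqP.
  by rewrite eqr_nat eqSS => /eqP.
  by move=> j; exact: F_meas.
rewrite (eq_bigr (fun j : 'I_M => (p * (1-p)^+j)%:E)); last first.
  by move=> j _; exact: (hX j.+1 (ltn0Sn j)).
rewrite sumEFin; congr EFin.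
elim: M => [|M IH]; first by rewrite big_ord0 expr0 subrr.
by rewrite big_ord_recr /= IH exprSr; ring.
Qed.

Lemma PGGC M : P (~` GG M) = ((1 - p) ^+ M)%:E.
Proof.
rewrite probability_setC; last exact: GG_meas.
by rewrite PGG -EFinB; congr EFin; ring.
Qed.

Lemma Ptail (a : nat) : (P (X @^-1` [set x : R | (a.+1%:R <= x)%R]) <= ((1 - p) ^+ a)%:E)%E.
Proof.
rewrite -PGGC; apply: le_measure; rewrite ?inE.
- have -> : [set x : R | a.+1%:R <= x] = [set` `[(a.+1%:R : R), +oo[].
    by apply/seteqP; split => x /=; rewrite in_itv /= andbT.
  exact: (measurable_funPTI X (measurable_itv _)).
- apply: measurableC; exact: GG_meas.
- move=> w /= ha hG; move: hG ha; rewrite /GG -bigcup_mkord => -[j /= hj] ->.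
  by rewrite ler_nat ltnS leqNgt hj.
Qed.

Definition Bad := ~` \bigcup_j F j.

Lemma Bad_meas : measurable Bad.
Proof. by apply: measurableC; apply: bigcup_measurable => j _; exact: F_meas. Qed.

Lemma PBad : P Bad = 0%E.
Proof.
have hB M : (P Bad <= ((1 - p) ^+ M)%:E)%E.
  rewrite -PGGC; apply: le_measure; rewrite ?inE.
  - exact: Bad_meas.
  - apply: measurableC; exact: GG_meas.
  - move=> w hw hG; apply: hw; move: hG; rewrite /GG -bigcup_mkord => -[j _ hj].
    by exists j.
apply/eqP; rewrite eq_le measure_ge0 andbT.
move: (measure_ge0 P Bad) hB; case: (P Bad) => [x _ hB'| _ /(_ 0%N) //| //].
rewrite lee_fin; apply: (@le_geo0 _ _ (1 - p)).
  by case/andP: hp => hp1 hp2; apply/andP; split; lra.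
by move=> M; rewrite -lee_fin.
Qed.

End Geom.
Lemma bigsetU_seqP (T : Type) (I : eqType) (r : seq I) (F : I -> set T) (w : T) :
  (\big[setU/set0]_(i <- r) F i) w <-> exists i, i \in r /\ F i w.
Proof.
elim: r => [|i r IH]; first by rewrite big_nil; split => // -[i []].
rewrite big_cons; split.
- case=> [h|/IH [j [hj hF]]]; first by exists i; rewrite mem_head.
  by exists j; rewrite in_cons hj orbT.
- move=> [j []]; rewrite in_cons => /orP [/eqP ->|hj] hF; first by left.
  by right; apply/IH; exists j.
Qed.

Lemma boole_seq d (T : measurableType d) (R : realType) (mu : probability T R)
  (I : Type) (r : seq I) (F : I -> set T) : (forall i, measurable (F i)) ->
  (mu (\big[setU/set0]_(i <- r) F i) <= \sum_(i <- r) mu (F i))%E.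
Proof.
move=> hF; elim: r => [|i r IH]; first by rewrite !big_nil measure0.
rewrite !big_cons; apply: le_trans (measureU2 _ _ _) _ => //.
  by apply: bigsetU_measurable.
exact: leeD2l.
Qed.

Arguments boole_seq {d T R} mu {I} r F.

Lemma lee_prod_fin (R : realType) (I : eqType) (r : seq I) (a : I -> \bar R) (b : I -> R) :
  (forall i, i \in r -> (0%R <= a i)%E /\ (a i <= (b i)%:E)%E) ->
  (\prod_(i <- r) a i <= (\prod_(i <- r) b i)%:E)%E.
Proof.
elim: r => [|i r IH] h; first by rewrite !big_nil.
have hi := h i (mem_head _ _).
have hr j : j \in r -> (0%R <= a j)%E /\ (a j <= (b j)%:E)%E.
  by move=> hj; apply: h; rewrite in_cons hj orbT.
rewrite !big_cons EFinM; apply: lee_pmul => //; first by case: hi.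
  by rewrite big_seq; apply: prode_ge0 => j hj; case: (hr j hj).
  by case: hi.
exact: IH.
Qed.

Lemma prodrX_sum (R : comPzRingType) (c : R) (r : seq nat) (f : nat -> nat) :
  \prod_(i <- r) c ^+ f i = c ^+ (\sum_(i <- r) f i)%N.
Proof.
elim: r => [|i r IH]; first by rewrite !big_nil.
by rewrite !big_cons IH exprD.
Qed.

Lemma sum_nth_iota (s : seq nat) k : size s = k ->
  (\sum_(i <- iota 1 k) nth 0 s i.-1)%N = sumn s.
Proof.
move=> hs; have -> : iota 1 k = [seq (1 + i)%N | i <- iota 0 k] by rewrite -iotaDl.
rewrite big_map sumnE [in RHS](big_nth 0) hs /index_iota subn0.
by apply: eq_bigr => i _; rewrite add1n.
Qed.

Theorem lemma3 (R : realType) :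
  exists beta : R -> R -> R,
    (forall u eta : R, 0 < u -> 0 < eta < u ->
      0 < beta u eta /\
      exists Delta2 : R, 0 < Delta2 /\
      exists N : nat, forall n : nat, (N <= n)%N ->
      forall m : nat, (0 < m)%N -> m%:R < beta u eta * n%:R ->
      forall (d : measure_display) (Omega : measurableType d)
             (P : probability Omega R) (T : nat -> {RV P >-> R}),
        mutually_independent P [set i | (1 <= i <= n)%N] T ->
        (forall i : nat, (1 <= i <= n)%N -> geometric_law P (p_coupon R n i) (T i)) ->
        (P [set w | (u * m%:R < \sum_(1 <= i < (Num.truncn ((u - eta) * m%:R)).+1) T i w)%R]
         <= (expR (- eta * m%:R * ln (n%:R / m%:R) + Delta2 * m%:R))%:E)%E)
    /\ (forall u eta1 eta2 : R, 0 < u -> 0 < eta1 -> eta1 <= eta2 -> eta2 < u ->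
          beta u eta1 <= beta u eta2)
    /\ (forall u : R, 0 < u ->
          beta u eta @[eta --> 0^'+] --> 0)
    /\ (forall eta u1 u2 : R, 0 < eta -> eta < u1 -> u1 <= u2 ->
          beta u2 eta <= beta u1 eta).
Proof.
exists (fun u eta => eta * (2 * u ^+ 2)^-1).
split; last split; last split.
- move=> u eta u0 /andP [e0 eu].
  have ln2 : 0 < ln (2:R) by apply: ln_gt0; lra.
  have u2 : 0 < 2 * u ^+ 2 by apply: mulr_gt0 => //; exact: exprn_gt0.
  split; first by apply: divr_gt0.
  exists (eta * `|ln (2 * u)| + u * ln 2 + 1); split.
    have : 0 <= eta * `|ln (2*u)| by apply: mulr_ge0 => //; exact: ltW.
    have : 0 < u * ln 2 by apply: mulr_gt0.
    lra.
  exists 0%N => n _ m m0 hm d Omega P T hind hgeo.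
  set k := Num.truncn ((u - eta) * m%:R).
  set L := (Num.truncn (eta * m%:R)).+1.
  have mpos : 0 < m%:R :> R by rewrite ltr0n.
  have hm' : m%:R * (2 * u ^+ 2) < eta * n%:R.
    by rewrite -ltr_pdivlMr // mulrAC.
  have npos : 0 < n%:R :> R.
    have : 0 < m%:R * (2 * u ^+ 2) by apply: mulr_gt0.
    move=> h; rewrite ltNge; apply/negP => hn.
    have : eta * n%:R <= 0 by apply: mulr_ge0_le0 => //; exact: ltW.
    lra.
  have h2um : 2 * u * m%:R < n%:R.
    have h1 : eta * n%:R < u * n%:R by rewrite ltr_pM2r.
    have h2 : (2 * u * m%:R) * u < n%:R * u.
      have -> : 2 * u * m%:R * u = m%:R * (2 * u ^+ 2) by ring.
      by rewrite [X in _ < X]mulrC; exact: lt_trans hm' h1.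
    by rewrite -(ltr_pM2r u0).
  have hk : k%:R <= (u - eta) * m%:R.
    by rewrite truncn_le; apply: mulr_ge0; lra.
  have hkum : k%:R <= u * m%:R by nra.
  have hkn : (k <= n)%N by rewrite -(ler_nat R); nra.
  have hL : eta * m%:R < L%:R.
    by have := truncn_le_nat (eta * m%:R) (Num.truncn (eta * m%:R)); rewrite leqnn /L => /esym.
  set c := u * m%:R / n%:R.
  have c0 : 0 < c by rewrite /c; apply: divr_gt0 => //; exact: mulr_gt0.
  have c2 : 2 * c < 1 by rewrite /c mulrA ltr_pdivrMr // mul1r mulrA.
  have hp i : (1 <= i <= n)%N -> 0 < p_coupon R n i <= 1.
    move=> /andP [i1 iN]; rewrite /p_coupon; apply/andP; split.
      apply: divr_gt0 => //; rewrite -(ler_nat R) in iN; lra.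
    rewrite ler_pdivrMr // mul1r; rewrite -(ler_nat R) in i1; lra.
  have hq i : (1 <= i <= k)%N -> 0 <= 1 - p_coupon R n i <= c.
    move=> /andP [i1 ik].
    have -> : 1 - p_coupon R n i = (i%:R - 1) / n%:R.
      by rewrite /p_coupon; field; rewrite gt_eqF.
    rewrite -(ler_nat R) in i1; rewrite -(ler_nat R) in ik.
    apply/andP; split; first by apply: divr_ge0; lra.
    by rewrite /c ler_pM2r ?invr_gt0 //; lra.
  pose V := [seq s <- vecs k L | sumn s == L].
  pose B (s : seq nat) (i : nat) := [set x : R | ((nth 0 s i.-1).+1%:R <= x)%R].
  pose Ev s := \bigcap_(i in [set` iota 1 k]) (T i @^-1` B s i).
  pose BadU := \big[setU/set0]_(i <- iota 1 k) Bad _ _ _ P (T i).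
  pose Good := \big[setU/set0]_(s <- V) Ev s.
  set E := [set w | _].
  have hmeasB s i : measurable (B s i).
    have -> : B s i = [set` `[((nth 0 s i.-1).+1%:R : R), +oo[].
      by apply/seteqP; split => x /=; rewrite in_itv /= andbT.
    exact: measurable_itv.
  have hmeasEv s : measurable (Ev s).
    by apply: bigcap_measurableType => i _; exact: measurable_funPTI.
  have hmeasE : measurable E.
    have -> : E = setT `&` ((fun w => \sum_(i <- index_iota 1 k.+1) T i w) @^-1` [set` `]u * m%:R, +oo[]).
      by apply/seteqP; split => w /=; rewrite in_itv /= andbT; [move=> h; split | case].

    apply: (measurable_sum _ _ measurableT (measurable_itv _)) => i.
    exact: measurable_funP.
  have hsub : E `<=` BadU `|` Good.
    move=> w hw; case: (pselect (BadU w)) => hb; [by left | right].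
    have hgood i : i \in iota 1 k -> exists j, T i w = j.+1%:R.
      move=> hi; have : ~ Bad _ _ _ P (T i) w.
        by move=> hB; apply: hb; apply/bigsetU_seqP; exists i.
      by rewrite /Bad /= => /contrapT [j _ hj]; exists j.
    pose e i := (Num.truncn (T i w)).-1.
    have he i : i \in iota 1 k -> T i w = (e i).+1%:R.
      by move=> /hgood [j hj]; rewrite /e hj natrK.
    have hsumw : \sum_(1 <= i < k.+1) T i w = (\sum_(j < k) e j.+1 + k)%:R.
      rewrite big_add1 /= big_mkord.
      rewrite (eq_bigr (fun j : 'I_k => ((e j.+1).+1)%:R)); last first.
        move=> j _; apply: he; rewrite mem_iota; apply/andP; split => //; by rewrite add1n ltnS ltn_ord.
      rewrite -natr_sum; congr (_%:R).
      under eq_bigr do rewrite -addn1.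
      by rewrite big_split /= sum_nat_const card_ord muln1.
    have hLS : (L <= \sum_(j < k) e j.+1)%N.
      rewrite /L truncn_lt_nat; last by apply: mulr_ge0 => //; exact: ltW.
      move: hw; rewrite /E /= hsumw natrD => hw; lra.
    have [s' [hs1 hs2 hs3]] := @exists_vec (fun j => e j.+1) k L hLS.
    apply/bigsetU_seqP; exists s'; split; first by rewrite mem_filter hs2 eqxx.
    move=> i /= hi; rewrite /B /=.
    move: (hi); rewrite mem_iota add1n ltnS => /andP [i1 ik].
    rewrite he // ler_nat ltnS.
    by have := hs3 i.-1; rewrite /= prednK //; apply.
  have hBd : P BadU = 0%E.
    apply/eqP; rewrite eq_le measure_ge0 andbT.
    apply: le_trans (boole_seq P (iota 1 k) (fun i => Bad _ _ _ P (T i)) _) _.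
      by move=> i; exact: Bad_meas.
    rewrite big1_seq //= => i; rewrite mem_iota => /andP [i1 ik].
    have hi : (1 <= i <= n)%N.
      by rewrite i1 /=; rewrite add1n ltnS in ik; exact: leq_trans ik hkn.
    exact: PBad (hp i hi) (hgeo i hi).
  have hEv s : s \in V -> (P (Ev s) <= (c ^+ L)%:E)%E.
    rewrite mem_filter => /andP [/eqP hsum hs].
    have hsize : size s = k by move: hs; rewrite mem_vecs => /andP [/eqP].
    have hJ : {subset iota 1 k <= [set i | (1 <= i <= n)%N]}.
      move=> i; rewrite mem_iota => /andP [i1 ik]; rewrite inE /= i1 /=.
      by rewrite add1n ltnS in ik; exact: leq_trans ik hkn.
    apply: (@le_trans _ _ (\prod_(i <- iota 1 k) P (T i @^-1` B s i))%E).
      rewrite le_eqVlt; apply/orP; left; apply/eqP.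
      exact: (hind (iota 1 k) (iota_uniq 1 k) hJ (B s) (hmeasB s)).
    apply: (@le_trans _ _ (\prod_(i <- iota 1 k) (1 - p_coupon R n i) ^+ (nth 0 s i.-1))%:E).
      apply: lee_prod_fin => i hi; split; first exact: measure_ge0.
      have hi' : (1 <= i <= n)%N by have := hJ i hi; rewrite inE.
      by apply: Ptail; exact: (hgeo i hi').
    rewrite lee_fin.
    apply: (@le_trans _ _ (\prod_(i <- iota 1 k) c ^+ (nth 0 s i.-1))).
      rewrite big_seq [X in _ <= X]big_seq; apply: ler_prod => i hi.
      have hik : (1 <= i <= k)%N by move: hi; rewrite mem_iota add1n ltnS.
      have /andP [q0 qc] := hq i hik.
      rewrite exprn_ge0 //=; apply: lerXn2r => //; rewrite nnegrE //; exact: ltW.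
    by rewrite prodrX_sum sum_nth_iota // hsum.
  have hcount : \sum_(s <- V) c ^+ L <= 2 ^+ k * (2 * c) ^+ L.
    rewrite big_filter.
    apply: (@le_trans _ _ (\sum_(s <- vecs k L) (2 * c) ^+ L * (2^-1) ^+ (sumn s))).
      rewrite big_mkcond /=; apply: ler_sum => s _; case: eqP => [->|_].
        by rewrite -exprMn mulrAC divff ?mul1r // pnatr_eq0.
      apply: mulr_ge0; apply: exprn_ge0; last by rewrite invr_ge0.
      by apply: mulr_ge0 => //; exact: ltW.
    rewrite -big_distrr /= sum_vecs mulrC; apply: ler_wpM2r.
      by apply: exprn_ge0; apply: mulr_ge0 => //; exact: ltW.
    apply: lerXn2r; rewrite ?nnegrE //; last exact: geo_half.
    by apply: sumr_ge0 => v _; apply: exprn_ge0; rewrite invr_ge0.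
  have hfinal : 2 ^+ k * (2 * c) ^+ L <= expR (- eta * m%:R * ln (n%:R / m%:R) + (eta * `|ln (2 * u)| + u * ln 2 + 1) * m%:R).
    have c2p : 0 < 2 * c by apply: mulr_gt0.
    have e1 : (2:R) ^+ k = expR (k%:R * ln 2) by rewrite expRM_natl lnK // posrE.
    have e2 : (2 * c) ^+ L = expR (L%:R * ln (2 * c)) by rewrite expRM_natl lnK // posrE.
    rewrite e1 e2 -expRD ler_expR.
    set A := ln (n%:R / m%:R).
    have hA : ln (2 * c) = ln (2 * u) - A.
      have -> : 2 * c = (2 * u) * (n%:R / m%:R)^-1.
        by rewrite /c invf_div; field; rewrite gt_eqF.
      rewrite lnM ?posrE; last by rewrite invr_gt0; apply: divr_gt0.
        by rewrite lnV // posrE; apply: divr_gt0.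
      by apply: mulr_gt0.
    have hl0 : ln (2 * c) <= 0 by apply: ln_le0; exact: ltW.
    have h1 : L%:R * ln (2 * c) <= eta * m%:R * ln (2 * c).
      by rewrite ler_wnM2r // ltW.
    have h2 : k%:R * ln 2 <= u * m%:R * ln 2 by rewrite ler_wpM2r // ltW.
    have h3 : eta * m%:R * ln (2 * u) <= eta * m%:R * `|ln (2 * u)|.
      by rewrite ler_wpM2l ?ler_norm //; apply: mulr_ge0; exact: ltW.
    rewrite hA in h1.
    have h4 : 0 <= m%:R :> R by exact: ltW.
    nra.
  have hsub' : E `<=` Good `|` BadU by rewrite setUC.
  have hmB : measurable BadU.
    by apply: bigsetU_measurable => i _; exact: Bad_meas.
  have hmG : measurable Good by apply: bigsetU_measurable => i _.
  apply: le_trans (le_measure _ _ _ hsub') _; rewrite ?inE //; first exact: measurableU.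
  apply: (@le_trans _ _ (P Good)).
    by rewrite le_eqVlt; apply/orP; left; apply/eqP; exact: measureU0.
  apply: le_trans (boole_seq P V Ev hmeasEv) _.
  apply: (@le_trans _ _ (\sum_(s <- V) (c ^+ L)%:E)%E).
    by rewrite big_seq_cond [in X in (_ <= X)%E]big_seq_cond; apply: lee_sum => s /andP [hs _]; exact: hEv.
  rewrite sumEFin lee_fin; exact: le_trans hcount hfinal.
- move=> u e1 e2 u0 e10 e12 _; apply: ler_wpM2r => //.
  by rewrite invr_ge0; apply: mulr_ge0 => //; exact: exprn_ge0 (ltW u0).
- move=> u u0.
  have h := @cvg_at_right_filter R R^o (fun eta : R => eta * (2 * u ^+ 2)^-1) 0 0.
  apply: h; rewrite -[X in _ --> X](mul0r (2 * u ^+ 2)^-1).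
  apply: cvgMl; exact: cvg_id.
- move=> e u1 u2 e0 eu1 u12; apply: ler_wpM2l; first exact: ltW.
  have u10 : 0 < u1 by apply: lt_trans eu1.
  have u20 : 0 < u2 by apply: lt_le_trans u12.
  rewrite lef_pV2 ?posrE; first last.
  + by apply: mulr_gt0 => //; exact: exprn_gt0.
  + by apply: mulr_gt0 => //; exact: exprn_gt0.
  by apply: ler_wpM2l => //; apply: lerXn2r => //; rewrite nnegrE ltW.
Qed.
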